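(* Let $G$ be a finite group with $s$ conjugacy classes, let $r\ge 2$ be a prime, and suppose exactly $d$ of the conjugacy classes of $G$ are not $r$-th powers, labeled so that $\mathcal{C}_1,\dots,\mathcal{C}_d$ are those not consisting of $r$-th powers and $\mathcal{C}_{d+1},\dots,\mathcal{C}_s$ are the rest. Let $g\in G\wr S_n$ have type $T(g)=(T(g)_{ij})_{s\times n}$. Then $g$ is an $r$-th power in $G\wr S_n$ if and only if $r\mid T(g)_{ij}$ whenever $r\mid j$ or $1\le i\le d$.
   Context: $G\wr S_n$ is the set of pairs $(f,\pi)$ with $f:\{1,\dots,n\}\to G$ and $\pi\in S_n$, with product $(f,\pi)(f',\pi')=(ff'_\pi,\pi\pi')$, $f'_\pi(i)=f'(\pi^{-1}(i))$, pointwise product of functions. For $(f,\pi)$ and a cycle $(j,\pi(j),\dots,\pi^t(j))$ of $\pi$, its cycle product is $f(j)f(\pi^{-1}(j))\cdots f(\pi^{-t}(j))$; its conjugacy class is independent of the starting point. The type $T(g)$ of $g=(f,\pi)$ is the $s\times n$ matrix whose $(i,k)$ entry is the number of $k$-cycles of $\pi$ whose cycle product lies in $\mathcal{C}_i$. A conjugacy class $\mathcal{C}$ of $G$ is an $r$-th power if $\mathcal{C}\subseteq\{x^r:x\in G\}$; an element $g$ of $G\wr S_n$ is an $r$-th power if $g=h^r$ for some $h\in G\wr S_n$. *)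

(* Defs.v *)
From mathcomp Require Import all_boot all_fingroup.
Set Implicit Arguments. Unset Strict Implicit. Unset Printing Implicit Defensive.
Local Open Scope group_scope.

Section Wreath.
Variables (gT : finGroupType) (n : nat).

Definition wr := ({ffun 'I_n -> gT} * {perm 'I_n})%type.

Definition wshift (f : {ffun 'I_n -> gT}) (p : {perm 'I_n}) : {ffun 'I_n -> gT} :=
  [ffun i => f (p^-1 i)].

(* (f,pi)(f',pi') = (f f'_pi, pi pi'), where pi pi' is the composition
   "first pi', then pi"; in MathComp's {perm} group this is pi' * pi. *)
Definition wmul (g h : wr) : wr :=
  ([ffun i => g.1 i * (wshift h.1 g.2) i], h.2 * g.2).

Definition wone : wr := ([ffun => 1], 1).

Fixpoint wpow (g : wr) (k : nat) : wr :=
  if k is k'.+1 then wmul g (wpow g k') else wone.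

Definition wr_rth_power (r : nat) (g : wr) : Prop := exists h : wr, wpow h r = g.

Definition cycle_prod (g : wr) (x : 'I_n) : gT :=
  \prod_(i < #|porbit g.2 x|) g.1 (((g.2)^-1 ^+ i)%g x).

Definition wtype (g : wr) (C : {set gT}) (k : nat) : nat :=
  #|[set O in porbits g.2 |
      (#|O| == k) && [exists x in O, cycle_prod g x \in C]]|.
End Wreath.

Definition class_rth_power (gT : finGroupType) (r : nat) (C : {set gT}) : bool :=
  C \subset [set x ^+ r | x in [set: gT]].

(* Main.v *)
Require Import Defs.
From mathcomp Require Import all_boot all_fingroup.
Set Implicit Arguments. Unset Strict Implicit. Unset Printing Implicit Defensive.

Section Wr.
Local Open Scope group_scope.
Variables (gT : finGroupType) (n : nat).
Implicit Types (g h : wr gT n).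

Lemma wmul1 g : (wmul g (wone gT n)).1 =1 g.1.
Proof. by move=> x; rewrite /wmul /= !ffunE mulg1. Qed.

Lemma wmulA g h (c : wr gT n) : wmul (wmul g h) c = wmul g (wmul h c).
Proof.
rewrite /wmul /=; congr pair; last by rewrite mulgA.
apply/ffunP=> i; rewrite /wshift !ffunE -mulgA; congr (_ * (_ * _)).
by rewrite invMg permM.
Qed.

Lemma wpow2 g k : (wpow g k).2 = g.2 ^+ k.
Proof. by elim: k => [|k IH] //=; rewrite IH expgSr. Qed.

Lemma wpowS1 g k x : (wpow g k.+1).1 x = g.1 x * (wpow g k).1 (g.2^-1 x).
Proof. by rewrite /= /wmul /wshift /= !ffunE. Qed.

Lemma wpow1 g k x : (wpow g k).1 x = \prod_(i < k) g.1 ((g.2^-1 ^+ i) x).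
Proof.
elim: k x => [|k IH] x; first by rewrite big_ord0 /= ffunE.
rewrite wpowS1 IH big_ord_recl expg0 perm1; congr (_ * _).
by apply: eq_bigr => i _; rewrite expgS permM.
Qed.

Lemma cycle_prodE g x : cycle_prod g x = (wpow g #|porbit g.2 x|).1 x.
Proof. by rewrite wpow1. Qed.

Lemma wpowD g a b : wpow g (a + b) = wmul (wpow g a) (wpow g b).
Proof.
elim: a => [|a IH] /=.
  rewrite /wmul /wone /=; case: (wpow g b) => f p /=; congr pair.
    by apply/ffunP=> i; rewrite /wshift !ffunE invg1 perm1 mul1g.
  by rewrite mulg1.
by rewrite IH wmulA.
Qed.

Lemma wpowM g a b : wpow g (a * b) = wpow (wpow g a) b.
Proof. by elim: b => [|b IH]; rewrite ?muln0 // mulnS wpowD IH. Qed.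

Lemma wpow_fix g m y : g.2 y = y -> (wpow g m).1 y = g.1 y ^+ m.
Proof.
move=> gy; elim: m => [|m IH]; first by rewrite /= ffunE.
have gy' : g.2^-1 y = y by rewrite -{1}gy permK.
by rewrite wpowS1 gy' IH expgS.
Qed.

Lemma wpow_conj g N y : (g.2 ^+ N) y = y ->
  (wpow g N).1 (g.2 y) = ((wpow g N).1 y) ^ (g.1 (g.2 y))^-1.
Proof.
move=> fy.
have e1 : (wpow g N.+1).1 (g.2 y) = g.1 (g.2 y) * (wpow g N).1 y.
  by rewrite wpowS1 permK.
have e2 : (wpow g N.+1).1 (g.2 y) = (wpow g N).1 (g.2 y) * g.1 (g.2 y).
  rewrite -addn1 wpowD /wmul /wshift /= !ffunE wpow2.
  have -> : (g.2 ^+ N)^-1 (g.2 y) = g.2 y.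
    apply: (@perm_inj _ (g.2 ^+ N)); rewrite permKV -permM -expgS expgSr permM.
    by rewrite fy.
  by rewrite /= mulg1.
rewrite /conjg invgK; apply: (mulIg (g.1 (g.2 y))).
by rewrite mulgA mulgKV -e2 e1.
Qed.

End Wr.

Section Orb.
Local Open Scope group_scope.
Variable T : finType.
Implicit Types (s p : {perm T}) (x y : T).

Lemma perm_fixX p x q : p x = x -> (p ^+ q) x = x.
Proof. by move=> px; elim: q => [|q IH]; rewrite ?perm1 // expgSr permM IH. Qed.

Lemma porbit_modE s x k : (s ^+ k) x = (s ^+ (k %% #|porbit s x|)) x.
Proof.
have fx : (s ^+ #|porbit s x|) x = x by rewrite permX iter_porbit.
by rewrite {1}(divn_eq k #|porbit s x|) expgD permM mulnC expgM (perm_fixX _ fx).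
Qed.

Lemma porbit_eqX s x i k :
  ((s ^+ i) x == (s ^+ k) x) = (i == k %[mod #|porbit s x|]).
Proof.
rewrite (porbit_modE s x i) (porbit_modE s x k) !permX.
have l0 : 0 < #|porbit s x| by rewrite lt0n card_porbit_neq0.
rewrite -!(nth_traject _ (ltn_pmod _ l0)).
by rewrite nth_uniq ?size_traject ?ltn_pmod ?uniq_traject_porbit.
Qed.

Lemma porbit_fix s x k : ((s ^+ k) x == x) = (#|porbit s x| %| k).
Proof.
by rewrite -{2}(perm1 x) -(expg0 s) porbit_eqX mod0n.
Qed.

Lemma porbit_card_gt0 s x : 0 < #|porbit s x|.
Proof. by rewrite lt0n card_porbit_neq0. Qed.

Lemma porbit_eq s x y : y \in porbit s x -> porbit s y = porbit s x.
Proof. by move=> h; apply/eqP; rewrite eq_porbit_mem. Qed.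

Lemma porbitS s x : porbit s (s x) = porbit s x.
Proof. by rewrite -(expg1 s) porbit_perm. Qed.

Lemma porbit_sub_pow s k x : {subset porbit (s ^+ k) x <= porbit s x}.
Proof.
by move=> y /porbitP[i ->]; rewrite -expgM mem_porbit.
Qed.

Lemma orbit_count s (Y : {set T}) k :
  (forall x, x \in Y -> s x \in Y) ->
  (forall x, x \in Y -> #|porbit s x| = k) ->
  #|Y| = (k * #|porbit s @: Y|)%N.
Proof.
move=> sY kY.
have sub : forall x, x \in Y -> porbit s x \subset Y.
  move=> x xY; apply/subsetP=> y /porbitP[i ->].
  elim: i => [|i IH]; first by rewrite perm1.
  by rewrite expgSr permM sY.
have P : partition (porbit s @: Y) Y.
  apply/and3P; split.
  - apply/eqP/setP=> y; apply/bigcupP/idP.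
      by case=> _ /imsetP[x xY ->] yO; apply: (subsetP (sub x xY)).
    by move=> yY; exists (porbit s y); rewrite ?imset_f ?porbit_id.
  - apply/trivIsetP=> _ _ /imsetP[x xY ->] /imsetP[z zY ->] neq.
    apply/pred0P=> y /=; apply/negbTE/negP=> /andP[yx yz].
    by move/negP: neq; apply; rewrite -(porbit_eq yx) -(porbit_eq yz).
  - apply/imsetP=> -[x _ e]; have := porbit_id s x; by rewrite -e inE.
rewrite (card_partition P) (eq_bigr (fun _ => k)) ?sum_nat_const 1?mulnC //.
by move=> _ /imsetP[x xY ->]; exact: kY.
Qed.
End Orb.

Section Cls.
Local Open Scope group_scope.
Variable gT : finGroupType.

Lemma classE (C : {set gT}) c : C \in classes [set: gT] -> c \in C ->
  C = c ^: [set: gT].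
Proof. by case/imsetP=> a _ -> /class_eqP ->. Qed.

Lemma class_conj (C : {set gT}) c w : C \in classes [set: gT] -> c \in C ->
  c ^ w \in C.
Proof. by move=> CC cC; rewrite (classE CC cC) memJ_class ?inE. Qed.

Lemma class_pow_of (C : {set gT}) t r : C \in classes [set: gT] ->
  t ^+ r \in C -> class_rth_power r C.
Proof.
move=> CC tC; rewrite /class_rth_power (classE CC tC).
apply/subsetP=> _ /imsetP[w _ ->]; rewrite conjXg.
by apply/imsetP; exists (t ^ w); rewrite ?inE.
Qed.
End Cls.

Section Comm.
Local Open Scope group_scope.
Variable T : finType.
Implicit Types (s p : {perm T}).

Lemma commX_app s p k z : commute s p -> (s ^+ k) (p z) = p ((s ^+ k) z).
Proof.
move=> c; have c' : commute p (s ^+ k) by apply: commuteX; exact: commute_sym.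
by rewrite -permM c' permM.
Qed.

Lemma card_porbit_comm s p z : commute s p ->
  #|porbit s (p z)| = #|porbit s z|.
Proof.
move=> c.
have H k : ((s ^+ k) (p z) == p z) = ((s ^+ k) z == z).
  by rewrite commX_app // (inj_eq perm_inj).
apply/eqP; rewrite eqn_dvd -porbit_fix H porbit_fix dvdnn /=.
by rewrite -porbit_fix -H porbit_fix.
Qed.
End Comm.

Section Fwd.
Local Open Scope group_scope.
Variables (gT : finGroupType) (n : nat).

Lemma forward r (h : wr gT n) (C : {set gT}) j : prime r ->
  C \in classes [set: gT] -> 0 < j ->
  (r %| j) || ~~ class_rth_power r C -> (r %| wtype (wpow h r) C j)%N.
Proof.
move=> pr CC j0 hyp.
have r0 : 0 < r by rewrite prime_gt0.
have r1 := prime_gt1 pr.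
set g := wpow h r; set p := h.2.
pose s := p ^+ r.
have gs : g.2 = s by rewrite /g wpow2.
have cs : commute s p by rewrite /s; apply: commute_sym; apply: commuteX; exact: commute_refl.
have cpE z : cycle_prod g z = (wpow h (r * #|porbit s z|)).1 z.
  by rewrite cycle_prodE gs wpowM.
have spow k z : (s ^+ k) z = (p ^+ (r * k)) z by rewrite /s -expgM.
set Y := [set x | (#|porbit s x| == j) && [exists y in porbit s x, cycle_prod g y \in C]].
have XE : [set O in porbits s | (#|O| == j) && [exists x in O, cycle_prod g x \in C]]
          = porbit s @: Y.
  apply/setP=> O; rewrite inE; apply/andP/imsetP.
    by case=> /imsetP[x _ ->] c; exists x; rewrite // inE.
  by case=> x; rewrite inE => c ->; split=> //; apply: imset_f.
have YI : forall x, x \in Y -> p x \in Y.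
  move=> x; rewrite !inE card_porbit_comm // => /andP[-> /existsP[y /andP[yx yC]]].
  apply/existsP; exists (p y); apply/andP; split.
    by case/porbitP: yx => i ->; rewrite -commX_app // mem_porbit.
  rewrite cpE card_porbit_comm // wpow_conj; first by apply: class_conj => //; rewrite -cpE.
  by rewrite -spow; apply/eqP; rewrite porbit_fix.
have YS : forall x, x \in Y -> s x \in Y.
  by move=> x; rewrite !inE porbitS.
have cY1 := orbit_count YS (k := j).
have sizeY : forall x, x \in Y -> #|porbit p x| = (r * j)%N.
  move=> x xY; have := xY; rewrite inE => /andP[/eqP jx /existsP[y /andP[yx yC]]].
  set l := #|porbit p x|.
  have E k : (j %| k) = (l %| r * k).
    by rewrite -jx -porbit_fix spow porbit_fix.
  have l_rj : l %| r * j by rewrite -E.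
  have j_l : j %| l by rewrite E dvdn_mull.
  case/dvdnP: j_l => t lE.
  have t_r : t %| r.
    by rewrite -(@dvdn_pmul2l j) // mulnC -lE mulnC.
  case/primeP: pr => _ /(_ t t_r) /orP[/eqP t1 | /eqP tr]; last by rewrite lE tr mulnC.
  rewrite t1 mul1n in lE.
  have nrj : ~~ (r %| j).
    apply/negP=> /dvdnP[q jq].
    have : j %| q by rewrite E lE jq mulnC dvdnn.
    move/dvdn_leq; rewrite jq.
    have q0 : 0 < q by move: j0; rewrite jq muln_gt0 => /andP[].
    by move/(_ q0); rewrite leqNgt -{1}(muln1 q) ltn_pmul2l // r1.
  rewrite (negbTE nrj) /= in hyp.
  have py : porbit p y = porbit p x.
    by apply: porbit_eq; apply: (porbit_sub_pow (k := r)).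
  have sy : porbit s y = porbit s x by apply: porbit_eq.
  move: yC; rewrite cpE sy jx mulnC wpowM wpow_fix.
    by move/(class_pow_of CC); rewrite (negbTE hyp).
  by rewrite wpow2; apply/eqP; rewrite porbit_fix py -/l lE.
have cY2 := orbit_count YI sizeY.
have : (j * #|porbit s @: Y| = j * (r * #|porbit p @: Y|))%N.
  rewrite -cY1; last by move=> x; rewrite inE => /andP[/eqP].
  by rewrite cY2 mulnCA mulnA.
move/eqP; rewrite eqn_pmul2l // => /eqP e.
by rewrite /wtype gs XE e dvdn_mulr.
Qed.
End Fwd.

Section ConjRoot.
Local Open Scope group_scope.
Variables (gT : finGroupType) (n : nat).
Variables (f : {ffun 'I_n -> gT}) (p : {perm 'I_n}).

Definition pbase (x : 'I_n) := odflt x [pick z in porbit p x].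

Lemma pbase_in x : pbase x \in porbit p x.
Proof. by rewrite /pbase; case: pickP => //= _; rewrite porbit_id. Qed.

Lemma pbase_eq x z : z \in porbit p x -> pbase z = pbase x.
Proof.
move=> zx; rewrite /pbase (porbit_eq zx).
case: pickP => //= /(_ x); rewrite porbit_id //.
Qed.

Lemma pbase_idem x : pbase (pbase x) = pbase x.
Proof. exact/pbase_eq/pbase_in. Qed.

Lemma traject_idx b x : x \in porbit p b ->
  (p ^+ index x (traject p b #|porbit p b|)) b = x.
Proof.
move=> xb; have xt : x \in traject p b #|porbit p b| by rewrite -porbit_traject.
have ix : index x (traject p b #|porbit p b|) < #|porbit p b|.
  by rewrite -{2}(size_traject p b #|porbit p b|) index_mem.
by rewrite permX -(nth_traject p ix) nth_index.
Qed.

Lemma conj_root r (h0 : wr gT n) : (wpow h0 r).2 = p ->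
  (forall x, exists w, cycle_prod (f, p) x = cycle_prod ((wpow h0 r).1, p) x ^ w) ->
  wr_rth_power r (f, p).
Proof.
move=> h0p hc.
set c := (wpow h0 r).1.
pose g : wr gT n := (f, p). pose gc : wr gT n := (c, p).
pose W b := odflt 1 [pick w | cycle_prod g b == cycle_prod gc b ^ w].
have WP b : cycle_prod g b = cycle_prod gc b ^ W b.
  rewrite /W; case: pickP => [w /eqP //|none].
  by case: (hc b) => w e; move: (none w); rewrite /= e eqxx.
pose U b k := (wpow g k).1 ((p ^+ k) b) * (W b)^-1 * ((wpow gc k).1 ((p ^+ k) b))^-1.
have Uper b k : U b (k + #|porbit p b|) = U b k.
  set l := #|porbit p b|.
  have fixb : (p ^+ l) b = b by apply/eqP; rewrite porbit_fix.
  have e1 : (p ^+ (k + l)) b = (p ^+ k) b by rewrite addnC expgD permM fixb.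
  have A (q : wr gT n) : q.2 = p ->
      (wpow q (k + l)).1 ((p ^+ k) b) = (wpow q k).1 ((p ^+ k) b) * cycle_prod q b.
    move=> q2; rewrite wpowD /wmul /wshift /= !ffunE wpow2 q2 permK cycle_prodE q2 //.
  rewrite /U e1 (A g) // (A gc) // (WP b) /conjg.
  by rewrite !invMg !mulgA mulgK mulgK.
have Umod b k : U b k = U b (k %% #|porbit p b|).
  rewrite {1}(divn_eq k #|porbit p b|) addnC.
  elim: (k %/ _) => [|q IH]; first by rewrite mul0n addn0.
  by rewrite mulSnr addnA Uper.
have Ueq b k k' : (p ^+ k) b = (p ^+ k') b -> U b k = U b k'.
  by move/eqP; rewrite porbit_eqX => /eqP e; rewrite Umod e -Umod.
have Urec b k : U b k.+1 = f ((p ^+ k.+1) b) * U b k * (c ((p ^+ k.+1) b))^-1.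
  rewrite /U !wpowS1 /= expgSr permM permK.
  by rewrite !invMg !mulgA.
pose u x := U (pbase x) (index x (traject p (pbase x) #|porbit p (pbase x)|)).
have uE x k : u ((p ^+ k) (pbase x)) = U (pbase x) k.
  have bb : pbase ((p ^+ k) (pbase x)) = pbase x.
    by rewrite (pbase_eq (mem_porbit _ _ _)) pbase_idem.
  rewrite /u bb; apply: Ueq; apply: traject_idx; exact: mem_porbit.
have feq x : f x = u x * c x * (u (p^-1 x))^-1.
  set b := pbase x.
  have : x \in porbit p b by rewrite porbit_sym pbase_in.
  case/porbitP=> i xi.
  set K := i + (#|porbit p b|).-1.
  have xK : (p ^+ K.+1) b = x.
    rewrite xi; apply/eqP; rewrite porbit_eqX -addnS prednK ?porbit_card_gt0 //.
    by rewrite modnDr.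
  have xK' : (p ^+ K) b = p^-1 x by rewrite -xK expgSr permM permK.
  rewrite -{2 3}xK -xK' !uE Urec.
  by rewrite -/b xK mulgKV mulgK.
clearbody u.
exists ([ffun y => u y * h0.1 y * (u (h0.2^-1 y))^-1], h0.2).
have tel k x : (wpow ([ffun y => u y * h0.1 y * (u (h0.2^-1 y))^-1], h0.2) k).1 x
             = u x * (wpow h0 k).1 x * (u ((h0.2 ^+ k)^-1 x))^-1.
  elim: k x => [|k IH] x.
    by rewrite /= !ffunE invg1 perm1 mulg1 mulgV.
  have e : (h0.2 ^- k.+1) x = (h0.2 ^- k) (h0.2^-1 x) by rewrite expgSr invMg permM.
  rewrite wpowS1 IH wpowS1 /= ffunE e.
  by rewrite !mulgA mulgKV.
rewrite /wr_rth_power [wpow _ r]surjective_pairing; congr (_, _).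
  apply/ffunP=> x; rewrite tel -wpow2 h0p.
  by rewrite feq.
by rewrite wpow2 -h0p wpow2.
Qed.
End ConjRoot.

Section Step2.
Local Open Scope group_scope.
Variables (gT : finGroupType) (n : nat).

Lemma class_trans (a b w : gT) : a \in b ^: [set: gT] -> a ^ w \in b ^: [set: gT].
Proof. by case/imsetP=> v _ ->; rewrite -conjgM memJ_class ?inE. Qed.

Lemma class_sym (a b : gT) : a \in b ^: [set: gT] -> exists w, b = a ^ w.
Proof. by case/imsetP=> v _ ->; exists v^-1; rewrite conjgK. Qed.

Lemma class_pow (a b : gT) r : a \in b ^: [set: gT] ->
  b \in [set z ^+ r | z in [set: gT]] -> a \in [set z ^+ r | z in [set: gT]].
Proof.
case/imsetP=> v _ -> /imsetP[t _ ->]; rewrite conjXg.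
by apply/imsetP; exists (t ^ v); rewrite ?inE.
Qed.

Lemma wpow_orbit (q : wr gT n) N y i : (q.2 ^+ N) y = y ->
  (wpow q N).1 ((q.2 ^+ i) y) \in (wpow q N).1 y ^: [set: gT].
Proof.
move=> fy; elim: i => [|i IH]; first by rewrite perm1 class_refl.
have fz : (q.2 ^+ N) ((q.2 ^+ i) y) = (q.2 ^+ i) y.
  by rewrite -permM -expgD addnC expgD permM fy.
by rewrite expgSr permM wpow_conj // class_trans.
Qed.

Lemma cp_orbit (q : wr gT n) y y' : y' \in porbit q.2 y ->
  cycle_prod q y' \in cycle_prod q y ^: [set: gT].
Proof.
move=> yy; rewrite !cycle_prodE (porbit_eq yy).
case/porbitP: yy => i ->; apply: wpow_orbit.
by apply/eqP; rewrite porbit_fix.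
Qed.

Variables (f : {ffun 'I_n -> gT}) (p : {perm 'I_n}).

Lemma step2 r (s : {perm 'I_n}) : prime r -> s ^+ r = p ->
  (forall x, (porbit s x = porbit p x /\
               cycle_prod (f, p) x \in [set z ^+ r | z in [set: gT]])
          \/ (#|porbit s x| = (r * #|porbit p x|)%N /\
              forall y, y \in porbit s x ->
                cycle_prod (f, p) y \in cycle_prod (f, p) x ^: [set: gT])) ->
  wr_rth_power r (f, p).
Proof.
move=> pr sr Ps.
have r1 := prime_gt1 pr.
pose cpf x := cycle_prod (f, p) x.
pose val b := if #|porbit s b| == #|porbit p b| then odflt 1 [pick z | z ^+ r == cpf b]
              else cpf b.
pose psi := [ffun x => if pbase s x == x then val x else 1].
pose h0 : wr gT n := (psi, s).
have h0r : (wpow h0 r).2 = p by rewrite wpow2.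
apply: (conj_root (h0 := h0) h0r) => x.
have eh : ((wpow h0 r).1, p) = wpow h0 r by rewrite [RHS]surjective_pairing h0r.
set b := pbase s x.
have bx : b \in porbit s x by apply: pbase_in.
have Lb : #|porbit s b| = #|porbit s x| by rewrite (porbit_eq bx).
have cpb : cycle_prod h0 b = val b.
  rewrite /cycle_prod /=.
  case E: #|porbit s b| => [|L]; first by move: (porbit_card_gt0 s b); rewrite E.
  rewrite big_ord_recl expg0 perm1 ffunE pbase_idem eqxx big1 ?mulg1 //.
  move=> i _; rewrite ffunE.
  have zb : ((s^-1) ^+ (bump 0 i)) b \in porbit s b by rewrite -porbitV mem_porbit.
  rewrite (pbase_eq zb) pbase_idem; case: eqP => // eb.
  have : ((s^-1) ^+ (lift ord0 i)) b == b by rewrite -eb.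
  rewrite porbit_fix porbitV E.
  by move/dvdn_leq => /(_ isT); rewrite lift0 ltnS leqNgt ltn_ord.
have cph x' : x' \in porbit s b -> cycle_prod h0 x' \in val b ^: [set: gT].
  by move=> xb; rewrite -cpb; exact: (cp_orbit (q := h0)).
have cphx : cycle_prod h0 x \in val b ^: [set: gT] by apply: cph; rewrite porbit_sym.
set L := #|porbit s x|; set l := #|porbit p x|.
have Ldiv : L %| r * l.
  by rewrite -porbit_fix expgM sr; apply/eqP; apply/eqP; rewrite porbit_fix.
case/dvdnP: Ldiv => q rlq.
have cp'E : cycle_prod ((wpow h0 r).1, p) x = cycle_prod h0 x ^+ q.
  rewrite eh cycle_prodE h0r -wpowM -/l rlq mulnC wpowM wpow_fix; first by rewrite cycle_prodE.
  by rewrite wpow2 /=; apply/eqP; rewrite porbit_fix.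
rewrite cp'E.
apply: class_sym.
case: (Ps x) => [[sp pw] | [sL cls]].
  have lL : l = L by rewrite /l /L sp.
  have qr : q = r.
    by apply/eqP; rewrite -(eqn_pmul2r (porbit_card_gt0 s x)) -/L -rlq lL.
  have bp : b \in porbit p x by rewrite -sp.
  have vb : val b ^+ r = cpf b.
    rewrite /val (porbit_eq bx) sp (porbit_eq bp) eqxx.
    case: pickP => [z /eqP //| none].
    have := class_pow (cp_orbit (q := (f, p)) bp) pw.
    by case/imsetP=> z _ e; move: (none z); rewrite -e eqxx.
  case/imsetP: cphx => v _ ->.
  rewrite qr -conjXg vb.
  by apply: class_trans; exact: (cp_orbit (q := (f, p)) bp).
have q1 : q = 1%N.
  apply/eqP; rewrite -(eqn_pmul2r (porbit_card_gt0 s x)) -/L -rlq mul1n /L /l sL //.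
have vb : val b = cpf b.
  rewrite /val; case: eqP => // e; exfalso.
  case: (Ps b) => [[sp' _] | [sL' _]].
    have xb : x \in porbit p b by rewrite -sp' porbit_sym.
    move: e; rewrite Lb sL -(porbit_eq xb) -/l => /eqP.
    rewrite -{2}(mul1n l) eqn_pmul2r ?porbit_card_gt0 // => /eqP r1'.
    by rewrite r1' in r1.
  move: e; rewrite sL' => /eqP; rewrite -{2}(mul1n #|_|) eqn_pmul2r ?porbit_card_gt0 //.
  by move=> /eqP r1'; rewrite r1' in r1.
rewrite q1 expg1; case/imsetP: cphx => v _ ->; rewrite vb; apply: class_trans.
exact: cls.
Qed.
End Step2.

Section Step3.
Local Open Scope group_scope.
Variables (gT : finGroupType) (n : nat).
Variables (f : {ffun 'I_n -> gT}) (p : {perm 'I_n}) (r : nat).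
Hypothesis pr : prime r.
Hypothesis H : forall C, C \in classes [set: gT] -> forall j, 1 <= j <= n ->
      (r %| j) || ~~ class_rth_power r C -> (r %| wtype (f, p) C j)%N.

Let r1 : 1 < r. Proof. exact: prime_gt1. Qed.
Let r0 : 0 < r. Proof. exact: prime_gt0. Qed.

Definition cpf x := cycle_prod (f, p) x.
Definition ell x := #|porbit p x|.
Definition cls x := cpf x ^: [set: gT].
Definition key x := (ell x, cls x).
Definition goodk (k : nat * {set gT}) := ~~ (r %| k.1) && class_rth_power r k.2.
Definition Lk k := enum [set b | (pbase p b == b) && (key b == k)].
Definition tr a b y := (p ^+ index y (traject p a (ell a))) b.

Lemma key_orbit x z : z \in porbit p x -> key z = key x.
Proof.
move=> zx; rewrite /key /ell /cls (porbit_eq zx); congr pair.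
by apply/class_eqP; exact: (cp_orbit (q := (f, p)) zx).
Qed.

Lemma key_pbase x : key (pbase p x) = key x.
Proof. exact/key_orbit/pbase_in. Qed.

Lemma ell_gt0 x : 0 < ell x.
Proof. exact: porbit_card_gt0. Qed.

Lemma tr_pow a b m : ell a = ell b -> tr a b ((p ^+ m) a) = (p ^+ m) b.
Proof.
move=> e; rewrite /tr; apply/eqP; rewrite porbit_eqX -/(ell b) -e -porbit_eqX.
by apply/eqP; apply: traject_idx; exact: mem_porbit.
Qed.

Lemma mem_Lk k b : (b \in Lk k) = (pbase p b == b) && (key b == k).
Proof. by rewrite /Lk mem_enum inE. Qed.

Lemma uniq_Lk k : uniq (Lk k).
Proof. exact: enum_uniq. Qed.

Lemma pbase_Lk y : pbase p y \in Lk (key y).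
Proof. by rewrite mem_Lk pbase_idem key_pbase !eqxx. Qed.

Lemma size_Lk k : size (Lk k) = #|[set b | (pbase p b == b) && (key b == k)]|.
Proof. by rewrite /Lk cardE. Qed.

Lemma wtype_Lk y : wtype (f, p) (cls y) (ell y) = size (Lk (key y)).
Proof.
rewrite size_Lk /wtype /=.
pose B := [set b | (pbase p b == b) && (key b == key y)].
rewrite -/B.
have -> : [set O in porbits p | (#|O| == ell y) &&
            [exists x in O, cycle_prod (f, p) x \in cls y]] = porbit p @: B.
  apply/setP=> O; rewrite inE; apply/andP/imsetP.
    case=> /imsetP[x _ ->] /andP[/eqP ex /existsP[z /andP[zx zC]]].
    exists (pbase p x); last by rewrite (porbit_eq (pbase_in p x)).
    rewrite inE pbase_idem eqxx /= key_pbase /key /ell ex.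
    have : cls z = cls y by apply/class_eqP.
    have e2 : cls z = cls x by move: (key_orbit zx); rewrite /key; case.
    by move=> e; rewrite -e2 e.
  case=> b; rewrite inE => /andP[/eqP bb /eqP kb] ->; split; first exact: imset_f.
  case: kb => eb cb; rewrite -/(ell b) eb eqxx /=.
  by apply/existsP; exists b; rewrite porbit_id -cb /cls class_refl.
rewrite card_in_imset // => b b'; rewrite !inE => /andP[/eqP bb _] /andP[/eqP bb' _] e.
by rewrite -bb -bb' (pbase_eq (x := b')) // -e porbit_id.
Qed.

Lemma bad_dvd y : ~~ goodk (key y) -> (r %| size (Lk (key y)))%N.
Proof.
move=> bad; rewrite -wtype_Lk; apply: H.
- exact: mem_classes.
- by rewrite ell_gt0 /= /ell (leq_trans (max_card _)) ?card_ord.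
- by move: bad; rewrite /goodk negb_and negbK.
Qed.


Definition idxb y := index (pbase p y) (Lk (key y)).
Definition eb y t := nth y (Lk (key y)) (r * (idxb y %/ r) + t).
Definition nx i := if i != r.-1 then i.+1 else 0.
Definition sinv l := (egcdn r l).1.
Definition sf y := if goodk (key y) then (p ^+ sinv (ell y)) y
   else if idxb y %% r != r.-1 then tr (pbase p y) (eb y (idxb y %% r).+1) y
   else p (tr (pbase p y) (eb y 0) y).

Section Bad.
Variable y : 'I_n.
Hypothesis bad : ~~ goodk (key y).

Lemma idxb_lt : idxb y < size (Lk (key y)).
Proof. by rewrite /idxb index_mem pbase_Lk. Qed.

Lemma blk_lt i : i < r -> r * (idxb y %/ r) + i < size (Lk (key y)).
Proof.
move=> ir; have := bad_dvd bad; case/dvdnP=> c sc.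
have := idxb_lt; rewrite sc -ltn_divLR // => qc.
apply: (@leq_trans (r * (idxb y %/ r).+1)); first by rewrite mulnS [r + _]addnC ltn_add2l.
by rewrite mulnC leq_mul2r qc orbT.
Qed.

Lemma eb_in i : i < r -> eb y i \in Lk (key y).
Proof. by move=> ir; rewrite /eb mem_nth // blk_lt. Qed.

Lemma eb_pbase i : i < r -> pbase p (eb y i) = eb y i.
Proof. by move=> ir; move: (eb_in ir); rewrite mem_Lk => /andP[/eqP]. Qed.

Lemma eb_key i : i < r -> key (eb y i) = key y.
Proof. by move=> ir; move: (eb_in ir); rewrite mem_Lk => /andP[_ /eqP]. Qed.

Lemma eb_ell i : i < r -> ell (eb y i) = ell y.
Proof. by move=> ir; rewrite /ell; case: (eb_key ir). Qed.

Lemma eb_cur : eb y (idxb y %% r) = pbase p y.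
Proof.
rewrite /eb mulnC -divn_eq nth_index //; exact: pbase_Lk.
Qed.

Lemma eb_idx i : i < r -> index (eb y i) (Lk (key y)) = r * (idxb y %/ r) + i.
Proof. by move=> ir; rewrite /eb index_uniq ?uniq_Lk ?blk_lt. Qed.

Lemma eb_inj i j : i < r -> j < r -> eb y i \in porbit p (eb y j) -> i = j.
Proof.
move=> ir jr ij; have := pbase_eq ij; rewrite !eb_pbase // => e.
by move: (eb_idx ir); rewrite e eb_idx // => /eqP; rewrite eqn_add2l => /eqP.
Qed.

Lemma blk_inv i z : i < r -> z \in porbit p (eb y i) ->
  [/\ key z = key y, idxb z = r * (idxb y %/ r) + i & forall j, j < r -> eb z j = eb y j].
Proof.
move=> ir zi.
have kz : key z = key y by rewrite (key_orbit zi) eb_key.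
have iz : idxb z = r * (idxb y %/ r) + i.
  by rewrite /idxb kz (pbase_eq zi) eb_pbase // eb_idx.
split=> // j jr; rewrite /eb kz iz.
have qE : ((r * (idxb y %/ r) + i) %/ r = idxb y %/ r)%N.
  by rewrite mulnC divnMDl // (divn_small ir) addn0.
by rewrite qE; apply: set_nth_default; rewrite blk_lt.
Qed.


Lemma nx_lt i : i < r -> nx i < r.
Proof.
rewrite /nx; case: eqP => // ne ir.
by rewrite ltn_neqAle ir andbT; apply/eqP=> e; apply: ne; rewrite -e.
Qed.

Lemma sf_step i m : i < r ->
  sf ((p ^+ m) (eb y i)) = (p ^+ (m + (i == r.-1))) (eb y (nx i)).
Proof.
move=> ir; set z := (p ^+ m) (eb y i).
have zi : z \in porbit p (eb y i) by exact: mem_porbit.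
case: (blk_inv ir zi) => kz iz ez.
have imod : idxb z %% r = i by rewrite iz mulnC modnMDl modn_small.
have pz : pbase p z = eb y i by rewrite (pbase_eq zi) eb_pbase.
rewrite /sf kz (negbTE bad) imod pz /nx.
have [ei|ne] := eqVneq i r.-1.
  rewrite /= (ez 0 r0) tr_pow; last by rewrite !eb_ell ?r0.
  by rewrite addn1 expgSr permM.
have i1r : i.+1 < r by have := nx_lt ir; rewrite /nx ne.
rewrite /= addn0 (ez _ i1r) tr_pow //.
by rewrite !eb_ell.
Qed.

Lemma iter_small i m : i < r -> iter i sf ((p ^+ m) (eb y 0)) = (p ^+ m) (eb y i).
Proof.
elim: i => [|i IH] ir //.
have ne : i != r.-1 by rewrite neq_ltn ltn_predRL ir.
by rewrite iterS IH ?(ltnW ir) // sf_step ?(ltnW ir) // (negbTE ne) addn0 /nx ne.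
Qed.

Lemma iter_r m : iter r sf ((p ^+ m) (eb y 0)) = (p ^+ m.+1) (eb y 0).
Proof.
rewrite -{1}(prednK r0) iterS iter_small ?ltn_predL // sf_step ?ltn_predL //.
by rewrite eqxx addn1 /nx eqxx.
Qed.

Lemma iter_gen a i m : i < r ->
  iter (r * a + i) sf ((p ^+ m) (eb y 0)) = (p ^+ (m + a)) (eb y i).
Proof.
elim: a m => [|a IH] m ir; first by rewrite muln0 add0n addn0 iter_small.
by rewrite mulnS -addnA addnC iterD iter_r IH // addSnnS.
Qed.

Definition mi := index y (traject p (pbase p y) #|porbit p (pbase p y)|).

Lemma yE : (p ^+ mi) (eb y (idxb y %% r)) = y.
Proof. by rewrite eb_cur traject_idx // porbit_sym pbase_in. Qed.

Lemma y_decomp : iter (idxb y %% r) sf ((p ^+ mi) (eb y 0)) = y.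
Proof. by rewrite iter_small ?ltn_pmod // yE. Qed.

Lemma sf_r_bad : iter r sf y = p y.
Proof.
rewrite -{1}y_decomp -iterD -{1}(muln1 r) iter_gen ?ltn_pmod //.
by rewrite addn1 expgSr permM yE.
Qed.

Lemma key_sf_bad : key (sf y) = key y.
Proof.
have i0r : idxb y %% r < r by rewrite ltn_pmod.
rewrite -{1}yE sf_step // (key_orbit (mem_porbit _ _ _)) eb_key //.
exact: nx_lt.
Qed.

End Bad.

Lemma sinv_mod l : ~~ (r %| l) -> sinv l * r = 1 %[mod l].
Proof.
move=> nd; rewrite /sinv; case: (egcdnP l r0) => km kn -> _ /=.
have : coprime r l by rewrite prime_coprime.
by rewrite /coprime => /eqP ->; rewrite modnMDl.
Qed.

Lemma sf_good_iter y j : goodk (key y) -> iter j sf y = (p ^+ (sinv (ell y) * j)) y.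
Proof.
move=> gy; elim: j => [|j IH]; first by rewrite muln0 expg0 perm1.
rewrite iterS IH.
have zy : (p ^+ (sinv (ell y) * j)) y \in porbit p y by exact: mem_porbit.
have kz := key_orbit zy.
have ez : ell ((p ^+ (sinv (ell y) * j)) y) = ell y by rewrite /ell (porbit_eq zy).
by rewrite /sf kz gy ez -permM -expgD mulnS addnC.
Qed.

Lemma sf_r y : iter r sf y = p y.
Proof.
case gy: (goodk (key y)); last by apply: sf_r_bad; rewrite gy.
rewrite sf_good_iter //; rewrite -{2}(expg1 p); apply/eqP; rewrite porbit_eqX.
apply/eqP; apply: sinv_mod; by case/andP: gy.
Qed.

Lemma sf_inj : injective sf.
Proof.
move=> y z e; apply: (@perm_inj _ p).
by rewrite -!sf_r -(prednK r0) !iterSr e.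
Qed.

Lemma key_sf y : key (sf y) = key y.
Proof.
case gy: (goodk (key y)); last by apply: key_sf_bad; rewrite gy.
by rewrite /sf gy; apply: key_orbit; exact: mem_porbit.
Qed.

Lemma key_iter y j : key (iter j sf y) = key y.
Proof. by elim: j => [|j IH] //; rewrite iterS key_sf. Qed.

Definition sigma := perm sf_inj.

Lemma sigmaX j y : (sigma ^+ j) y = iter j sf y.
Proof. by rewrite permX; apply: eq_iter; exact: permE. Qed.

Lemma sigma_r : sigma ^+ r = p.
Proof. by apply/permP=> y; rewrite sigmaX sf_r. Qed.


Lemma sigma_P x :
  (porbit sigma x = porbit p x /\
     cycle_prod (f, p) x \in [set z ^+ r | z in [set: gT]])
  \/ (#|porbit sigma x| = (r * #|porbit p x|)%N /\
      forall y, y \in porbit sigma x ->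
        cycle_prod (f, p) y \in cycle_prod (f, p) x ^: [set: gT]).
Proof.
case gx: (goodk (key x)).
  left; split.
    apply/setP=> y; apply/porbitP/porbitP => -[i ->].
      by exists (sinv (ell x) * i)%N; rewrite sigmaX sf_good_iter.
    by exists (r * i)%N; rewrite expgM sigma_r.
  by case/andP: gx => _ /subsetP; apply; exact: class_refl.
have bad : ~~ goodk (key x) by rewrite gx.
right; split; last first.
  move=> y /porbitP[j ->]; rewrite sigmaX.
  have := key_iter x j; rewrite /key => -[_ e].
  by rewrite -/(cpf _) -/(cls x) -e class_refl.
set e0 := eb x 0.
have xe : x \in porbit sigma e0.
  apply/porbitP; exists (r * mi x + idxb x %% r)%N; rewrite sigmaX.
  have := @iter_gen x bad (mi x) (idxb x %% r) 0 (ltn_pmod _ r0).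
  by rewrite expg0 perm1 add0n yE.
rewrite (porbit_eq xe) -/(ell x).
have E j : ((sigma ^+ j) e0 == e0) = (r * ell x %| j).
  set q := j %/ r; set t := j %% r.
  have jE : j = (r * q + t)%N by rewrite /q /t mulnC -divn_eq.
  have tr' : t < r by rewrite ltn_pmod.
  rewrite sigmaX {1}jE.
  have := @iter_gen x bad q t 0 tr'; rewrite expg0 perm1 add0n => ->.
  apply/eqP/idP.
    move=> h.
    have hi : eb x t \in porbit p e0 by rewrite porbit_sym -h mem_porbit.
    have t0 := eb_inj bad tr' r0 hi.
    move: h; rewrite t0 => /eqP; rewrite porbit_fix -/(ell e0) eb_ell // => d.
    by rewrite jE t0 addn0 dvdn_pmul2l.
  move=> d.
  have rj : r %| j by apply: dvdn_trans d; exact: dvdn_mulr.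
  have t0 : t = 0 by apply/eqP; rewrite /t.
  move: d; rewrite jE t0 addn0 dvdn_pmul2l // => d.
  by apply/eqP; rewrite porbit_fix -/(ell e0) eb_ell.
apply/eqP; rewrite eqn_dvd -porbit_fix E dvdnn /=.
by rewrite -E porbit_fix.
Qed.

End Step3.
Unset Implicit Arguments.

Theorem proposition4p3 (gT : finGroupType) (n r : nat) (g : wr gT n) :
  prime r ->
  (wr_rth_power r g <->
   (forall C, C \in classes [set: gT] -> forall j, 1 <= j <= n ->
      (r %| j) || ~~ class_rth_power r C -> r %| wtype g C j)).
Proof.
move=> pr; case: g => f p; split.
  case=> h hE C CC j /andP[j0 _] hyp; rewrite -hE; exact: forward.
move=> H.
exact: (step2 pr (sigma_r pr H) (sigma_P pr H)).
Qed.
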